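(* Let $H$ and $F$ be $r$-uniform hypergraphs. The following are equivalent: (1) there is a homomorphism from $H$ to $F$; (2) there exists a function $g:i(F)\to i(H)$ such that the sets $A_x=\bigcap_{I\in i(F),\,x\in I} g(I)$, for $x\in V(F)$, cover $V(H)$, i.e. $\bigcup_{x\in V(F)}A_x=V(H)$.
   Context: A hypergraph $H$ has a finite vertex set $V(H)$ and a set $E(H)$ of subsets of $V(H)$; it is $r$-uniform if every edge has exactly $r$ elements. A set of vertices is independent if it contains no edge; $i(H)$ is the family of inclusion-wise maximal independent sets of $H$. A map $f:V(H)\to V(F)$ is a homomorphism if for every edge $h$ of $H$ the image $f(h)$ is an edge of $F$. An intersection over an empty family of subsets of $V(H)$ is taken to be $V(H)$. *)

(* Defs.v *)
From mathcomp Require Import all_boot.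
Set Implicit Arguments. Unset Strict Implicit. Unset Printing Implicit Defensive.

Definition uniform (V : finType) (E : {set {set V}}) (r : nat) : Prop :=
  forall e, e \in E -> #|e| = r.

Definition independent (V : finType) (E : {set {set V}}) (S : {set V}) : bool :=
  [forall e in E, ~~ (e \subset S)].

Definition max_indep (V : finType) (E : {set {set V}}) : {set {set V}} :=
  [set S | maxset (independent E) S].

Definition is_hom (VH VF : finType) (EH : {set {set VH}}) (EF : {set {set VF}})
  (f : VH -> VF) : Prop :=
  forall h, h \in EH -> f @: h \in EF.

(* A_x = intersection of g(I) over I in i(F) containing x (empty intersection = V(H)). *)
Definition Aset (VH VF : finType) (EF : {set {set VF}}) (g : {set VF} -> {set VH})
  (x : VF) : {set VH} :=
  \bigcap_(I in max_indep EF | x \in I) g I.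

(* Main.v *)
Require Import Defs.
From mathcomp Require Import all_boot.

Lemma indep_ext (V : finType) (E : {set {set V}}) (S : {set V}) :
  independent E S -> {M : {set V} | M \in max_indep E & S \subset M}.
Proof.
move=> HS; have [M HM HSM] := maxset_exists HS.
by exists M => //; rewrite inE.
Qed.

Lemma max_indep_indep (V : finType) (E : {set {set V}}) (S : {set V}) :
  S \in max_indep E -> independent E S.
Proof. by rewrite inE => /maxsetp. Qed.

Theorem mainTheorem12 (VH VF : finType) (EH : {set {set VH}}) (EF : {set {set VF}})
  (r : nat) (uH : uniform EH r) (uF : uniform EF r) :
  (exists f : VH -> VF, is_hom EH EF f) <->
  (exists g : {set VF} -> {set VH},
      (forall I, I \in max_indep EF -> g I \in max_indep EH) /\
      \bigcup_(x : VF) Aset EF g x = [set: VH]).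
Proof.
split.
- move=> [f Hf].
  have indpre : forall I, I \in max_indep EF -> independent EH (f @^-1: I).
    move=> I /max_indep_indep /forall_inP HI; apply/forall_inP => h hE.
    apply/negP => hsub; move: (HI _ (Hf _ hE)) => /negP; apply.
    apply/subsetP => y /imsetP [v vh ->].
    by have := subsetP hsub v vh; rewrite inE.
  have ex : forall I, exists M, (I \in max_indep EF) ==> (M \in max_indep EH) && (f @^-1: I \subset M).
    move=> I; case HI: (I \in max_indep EF); last by exists set0.
    by have [M HM HSM] := @indep_ext _ _ _ (indpre I HI); exists M; rewrite HM HSM.
  exists (fun I => xchoose (ex I)); split.
    by move=> I HI; move/implyP: (xchooseP (ex I)) => /(_ HI) /andP [].
  apply/setP => v; rewrite !inE; apply/bigcupP; exists (f v) => //.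
  apply/bigcapP => I /andP [HI xI]; move/implyP: (xchooseP (ex I)) => /(_ HI) /andP [_ /subsetP]; apply.
  by rewrite inE.
- move=> [g [Hg Hcov]].
  have Hx : forall v, exists x, v \in Aset EF g x.
    move=> v; have : v \in [set: VH] by rewrite inE.
    by rewrite -Hcov => /bigcupP [x _ Hx]; exists x.
  exists (fun v => xchoose (Hx v)) => h hE.
  set f := fun v => xchoose (Hx v).
  apply/negPn/negP => Hnot.
  have Hind : independent EF (f @: h).
    apply/forall_inP => e eE; apply/negP => esub.
    have : e == f @: h.
      rewrite eqEcard esub /= (uF _ eE) -(uH _ hE); exact: leq_imset_card.
    by move/eqP => ee; rewrite -ee eE in Hnot.
  have [I HI hI] := @indep_ext _ _ _ Hind.
  have := @max_indep_indep _ _ _ (Hg _ HI) => /forall_inP /(_ _ hE) /negP; apply.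
  apply/subsetP => v vh.
  have := xchooseP (Hx v); rewrite /Aset => /bigcapP; apply.
  by rewrite HI /=; apply: (subsetP hI); apply: imset_f.
Qed.
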